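(* Let $M,N\ge1$, $\gamma>0$, $\lambda_x,\lambda_v,\lambda_w>0$, and let $\{(\hat x_i,\hat v_i)\}_{i=1}^N$ solve the centralized herding system \[ \frac{d\hat x_i}{dt}=\hat v_i,\qquad \frac{d\hat v_i}{dt}=\frac{\lambda_x}{N}\sum_{j=1}^N\hat\phi_{ij}(\hat x_j-\hat x_i)+\frac{\lambda_v}{N}\sum_{j=1}^N\hat\phi_{ij}(\hat v_j-\hat v_i)-\lambda_w\hat x_i,\qquad \hat\phi_{ij}=(1+|\hat x_i-\hat x_j|^2)^{-\gamma/2}. \] Fix $t>0$ and assume $\sum_{i,j}|\hat v_i(t)-\hat v_j(t)|=0$ while $\sum_{i,j}|\hat x_i(t)-\hat x_j(t)|\ne0$. Then $\mathcal{E}_2'(t)=\mathcal{E}_2''(t)=0$ and $\mathcal{E}_2'''(t)<0$.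
   Context: $|\cdot|$ is the Euclidean norm on $\mathbb{R}^M$. $X=\sum_i|\hat x_i|^2$, $V=\sum_i|\hat v_i|^2$, \[ S_\gamma=\begin{cases}\frac1N\sum_{i,j}\big\{(1+|\hat x_i-\hat x_j|^2)^{-(\gamma-2)/2}-1\big\}, & 0<\gamma<2,\\ \frac1N\sum_{i,j}\log(1+|\hat x_i-\hat x_j|^2), & \gamma=2,\\ \frac1N\sum_{i,j}\big\{1-(1+|\hat x_i-\hat x_j|^2)^{-(\gamma-2)/2}\big\}, & \gamma>2,\end{cases} \qquad \beta_\gamma=\begin{cases}2-\gamma,&0<\gamma<2,\\2,&\gamma=2,\\\gamma-2,&\gamma>2,\end{cases} \] and $\mathcal{E}_2=\lambda_wX+V+\lambda_x\beta_\gamma^{-1}S_\gamma$; primes denote time derivatives along the solution. *)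

(* Defs.v *)
From HB Require Import structures.
From mathcomp Require Import all_boot all_order all_algebra.
From mathcomp Require Import all_classical all_reals all_analysis.
Set Implicit Arguments. Unset Strict Implicit. Unset Printing Implicit Defensive.
Import Order.TTheory GRing.Theory Num.Theory.
Local Open Scope ring_scope.

(* A trajectory of N particles in R^M: x i k s = k-th coordinate of x_i at time s. *)

Definition sqdist {R : realType} {N M : nat} (x : 'I_N -> 'I_M -> R -> R)
  (i j : 'I_N) (s : R) : R := \sum_(k < M) (x i k s - x j k s) ^+ 2.

Definition eucl_dist {R : realType} {N M : nat} (x : 'I_N -> 'I_M -> R -> R)
  (i j : 'I_N) (s : R) : R := Num.sqrt (sqdist x i j s).

Definition phihat {R : realType} {N M : nat} (gamma : R) (x : 'I_N -> 'I_M -> R -> R)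
  (i j : 'I_N) (s : R) : R := powR (1 + sqdist x i j s) (- (gamma / 2)).

Definition Xhat {R : realType} {N M : nat} (x : 'I_N -> 'I_M -> R -> R) (s : R) : R :=
  \sum_(i < N) \sum_(k < M) (x i k s) ^+ 2.

Definition S_gamma {R : realType} {N M : nat} (gamma : R) (x : 'I_N -> 'I_M -> R -> R)
  (s : R) : R :=
  if gamma < 2 then
    (N%:R)^-1 * \sum_(i < N) \sum_(j < N)
       (powR (1 + sqdist x i j s) (- ((gamma - 2) / 2)) - 1)
  else if gamma == 2 then
    (N%:R)^-1 * \sum_(i < N) \sum_(j < N) ln (1 + sqdist x i j s)
  else
    (N%:R)^-1 * \sum_(i < N) \sum_(j < N)
       (1 - powR (1 + sqdist x i j s) (- ((gamma - 2) / 2))).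

Definition beta_gamma {R : realType} (gamma : R) : R :=
  if gamma < 2 then 2 - gamma else if gamma == 2 then 2 else gamma - 2.

Definition E2 {R : realType} {N M : nat} (gamma lx lw : R)
  (x v : 'I_N -> 'I_M -> R -> R) (s : R) : R :=
  lw * Xhat x s + Xhat v s + lx / beta_gamma gamma * S_gamma gamma x s.

(* Main.v *)
Require Import Defs.
From HB Require Import structures.
From mathcomp Require Import all_boot all_order all_algebra.
From mathcomp Require Import all_classical all_reals all_analysis.
From mathcomp Require Import ring lra.
Set Implicit Arguments. Unset Strict Implicit. Unset Printing Implicit Defensive.
Import Order.TTheory GRing.Theory Num.Theory.
Local Open Scope ring_scope.

Section D.
Variable R : realType.
Implicit Types (f g : R -> R) (s df dg : R).

Lemma dM f g s df dg : is_derive s 1 f df -> is_derive s 1 g dg ->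
  is_derive s 1 (fun u => f u * g u) (f s * dg + g s * df).
Proof. move=> hf hg; exact: (is_deriveM hf hg). Qed.

Lemma dD f g s df dg : is_derive s 1 f df -> is_derive s 1 g dg ->
  is_derive s 1 (fun u => f u + g u) (df + dg).
Proof. move=> hf hg; exact: (is_deriveD hf hg). Qed.

Lemma dB f g s df dg : is_derive s 1 f df -> is_derive s 1 g dg ->
  is_derive s 1 (fun u => f u - g u) (df - dg).
Proof. move=> hf hg; exact: (is_deriveB hf hg). Qed.

Lemma dC (c : R) s : is_derive s 1 (fun _ => c) 0.
Proof. exact: is_derive_cst. Qed.

Lemma dCM (c : R) f s df : is_derive s 1 f df ->
  is_derive s 1 (fun u => c * f u) (c * df).
Proof. move=> hf; have := dM (dC c s) hf; by rewrite mulr0 addr0. Qed.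

Lemma dS n (h : 'I_n -> R -> R) s (dh : 'I_n -> R) :
  (forall i, is_derive s 1 (h i) (dh i)) ->
  is_derive s 1 (fun u => \sum_(i < n) h i u) (\sum_(i < n) dh i).
Proof. move=> hh; rewrite -fct_sumE; exact: is_derive_sum. Qed.

Lemma dcomp f g s df dg : is_derive s 1 f df -> is_derive (f s) 1 g dg ->
  is_derive s 1 (fun u => g (f u)) (dg * df).
Proof.
move=> hf hg.
have df1 : derivable f s 1 by exact: ex_derive.
have dg1 : derivable g (f s) 1 by exact: ex_derive.
have hc : derivable (g \o f) s 1.
  apply/derivable1_diffP; apply: differentiable_comp; exact/derivable1_diffP.
apply: DeriveDef => //.
rewrite -derive1E (derive1_comp df1 dg1) !derive1E.
by rewrite !derive_val.
Qed.

Lemma dpow f s df (p : R) : 0 < f s -> is_derive s 1 f df ->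
  is_derive s 1 (fun u => powR (f u) p) (p * powR (f s) (p - 1) * df).
Proof. move=> fp hf; exact: (dcomp hf (is_derive1_powR p fp)). Qed.

Lemma dln f s df : 0 < f s -> is_derive s 1 f df ->
  is_derive s 1 (fun u => ln (f u)) ((f s)^-1 * df).
Proof. move=> fp hf; exact: (dcomp hf (is_derive1_ln fp)). Qed.

Lemma dsq f s df : is_derive s 1 f df ->
  is_derive s 1 (fun u => f u ^+ 2) (2 * (f s * df)).
Proof. move=> hf; have := dM hf hf.
under [fun u => _]funext do rewrite -expr2. move=> h; apply: is_derive_eq; by rewrite -mulr2n mulr_natl mulrC. Qed.
End D.

Lemma symsum (R : realType) (N M : nat) (p : 'I_N -> 'I_N -> R) (a b : 'I_N -> 'I_M -> R) :
  (forall i j, p i j = p j i) ->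
  \sum_(i < N) \sum_(k < M) 2 * (a i k * \sum_(j < N) p i j * (b j k - b i k)) =
  - \sum_(i < N) \sum_(j < N) p i j * \sum_(k < M) (b i k - b j k) * (a i k - a j k).
Proof.
move=> ps.
pose T i j := p i j * \sum_(k < M) a i k * (b j k - b i k).
have E1 : \sum_(i < N) \sum_(k < M) 2 * (a i k * \sum_(j < N) p i j * (b j k - b i k))
   = 2 * \sum_(i < N) \sum_(j < N) T i j.
  rewrite mulr_sumr; apply: eq_bigr => i _.
  rewrite mulr_sumr.
  transitivity (\sum_(k < M) \sum_(j < N) 2 * (p i j * (a i k * (b j k - b i k)))).
    apply: eq_bigr => k _; rewrite mulr_sumr mulr_sumr; apply: eq_bigr => j _; ring.
  rewrite exchange_big /=; apply: eq_bigr => j _.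
  rewrite /T mulr_sumr mulr_sumr; apply: eq_bigr => k _; ring.
rewrite E1.
have E2 : \sum_(i < N) \sum_(j < N) T i j = \sum_(i < N) \sum_(j < N) T j i.
  by rewrite exchange_big.
have E3 : 2 * \sum_(i < N) \sum_(j < N) T i j =
   \sum_(i < N) \sum_(j < N) (T i j + T j i).

  transitivity (\sum_(i < N) \sum_(j < N) T i j + \sum_(i < N) \sum_(j < N) T j i).
    by rewrite -E2 mulr_natl mulr2n.
  rewrite -big_split; apply: eq_bigr => i _; by rewrite -big_split.
rewrite E3 -sumrN; apply: eq_bigr => i _; rewrite -sumrN; apply: eq_bigr => j _.
rewrite /T (ps j i) -mulrDr -mulrN -sumrN -big_split; congr (_ * _).
apply: eq_bigr => k _ /=; ring.
Qed.

Lemma symsumc (R : realType) (N M : nat) (c : R) (p : 'I_N -> 'I_N -> R) (a b : 'I_N -> 'I_M -> R) :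
  (forall i j, p i j = p j i) ->
  \sum_(i < N) \sum_(k < M) 2 * (a i k * (c * \sum_(j < N) p i j * (b j k - b i k))) =
  - (c * \sum_(i < N) \sum_(j < N) p i j * \sum_(k < M) (b i k - b j k) * (a i k - a j k)).
Proof.
move=> ps; rewrite -mulrN -symsum //.
rewrite mulr_sumr; apply: eq_bigr => i _; rewrite mulr_sumr; apply: eq_bigr => k _; ring.
Qed.

Lemma deq (R : realType) (f : R -> R) (s d d' : R) : is_derive s 1 f d -> d = d' -> is_derive s 1 f d'.
Proof. by move=> h <-. Qed.

Lemma exd (R : realType) (f : R -> R) (s d : R) : is_derive s 1 f d -> derivable f s 1.
Proof. by move=> h; exact: ex_derive. Qed.

Section Sys.
Variable R : realType.
Variables (M N : nat) (gamma lx lv lw : R) (x v : 'I_N -> 'I_M -> R -> R).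
Implicit Types (s : R) (i j : 'I_N) (k : 'I_M).

Definition Af i k s := lx / N%:R * \sum_(j < N) phihat gamma x i j s * (x j k s - x i k s)
        + lv / N%:R * \sum_(j < N) phihat gamma x i j s * (v j k s - v i k s)
        - lw * x i k s.
Definition Dxv i j s := \sum_(k < M) (x i k s - x j k s) * (v i k s - v j k s).
Definition Dvv i j s := \sum_(k < M) (v i k s - v j k s) * (Af i k s - Af j k s).

Hypothesis Hx : forall s : R, 0 < s -> forall (i : 'I_N) (k : 'I_M),
     is_derive s 1 (x i k) (v i k s).
Hypothesis Hv : forall s : R, 0 < s -> forall (i : 'I_N) (k : 'I_M),
     is_derive s 1 (v i k) (Af i k s).

Lemma sqdist_ge0 (y : 'I_N -> 'I_M -> R -> R) i j s : 0 <= sqdist y i j s.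
Proof. by apply: sumr_ge0 => k _; exact: sqr_ge0. Qed.

Lemma sqdistC (y : 'I_N -> 'I_M -> R -> R) i j s : sqdist y i j s = sqdist y j i s.
Proof. by apply: eq_bigr => k _; rewrite -sqrrN opprB. Qed.

Lemma d_sqx i j s : 0 < s -> is_derive s 1 (sqdist x i j) (2 * Dxv i j s).
Proof.
move=> s0; eapply deq.
  rewrite /sqdist; apply: dS => k; apply: dsq; apply: dB; exact: Hx.
by rewrite /Dxv mulr_sumr.
Qed.

Lemma d_sqv i j s : 0 < s -> is_derive s 1 (sqdist v i j) (2 * Dvv i j s).
Proof.
move=> s0; eapply deq.
  rewrite /sqdist; apply: dS => k; apply: dsq; apply: dB; exact: Hv.
by rewrite /Dvv mulr_sumr.
Qed.

Lemma d_pow (p : R) i j s : 0 < s ->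
  is_derive s 1 (fun u => powR (1 + sqdist x i j u) p)
    (p * powR (1 + sqdist x i j s) (p - 1) * (2 * Dxv i j s)).
Proof.
move=> s0; apply: dpow.
  by apply: (lt_le_trans ltr01); rewrite lerDl sqdist_ge0.
eapply deq.
  exact: (dD (dC 1 s) (d_sqx _ _ s0)).
by rewrite add0r.
Qed.

Lemma d_phi i j s : 0 < s ->
  is_derive s 1 (phihat gamma x i j)
    (- (gamma / 2) * powR (1 + sqdist x i j s) (- (gamma / 2) - 1) * (2 * Dxv i j s)).
Proof. move=> s0; exact: d_pow. Qed.

Lemma der_A i k s : 0 < s -> derivable (Af i k) s 1.
Proof.
move=> s0; eapply exd.
rewrite /Af; apply: dB; last by apply: dCM; exact: Hx.
apply: dD; apply: dCM; apply: dS => j; apply: dM; try exact: d_phi;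
  apply: dB; by [exact: Hx | exact: Hv].
Qed.


Hypothesis HN : (0 < N)%N.

Lemma d_S s : 0 < s -> is_derive s 1 (fun u => lx / beta_gamma gamma * S_gamma gamma x u)
   (lx / N%:R * \sum_i \sum_j phihat gamma x i j s * Dxv i j s).
Proof.
have N0 : N%:R != 0 :> R by rewrite pnatr_eq0 -lt0n.
move=> s0; rewrite /S_gamma /beta_gamma.
have [g2|g2] := ltP gamma 2.
  eapply deq.
    apply: dCM; apply: dCM; apply: dS => i; apply: dS => j.
    exact: (dB (d_pow _ _ _ s0) (dC _ _)).
  have e : - ((gamma - 2) / 2) - 1 = - (gamma / 2) by lra.
  have g0 : 2 - gamma != 0 by rewrite subr_eq0 eq_sym lt_eqF.
  transitivity (lx / (2 - gamma) * (N%:R^-1 * ((2 - gamma) *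
     \sum_i \sum_j phihat gamma x i j s * Dxv i j s))); last by field; rewrite ?N0 ?g0.
  congr (_ * (_ * _)); rewrite mulr_sumr; apply: eq_bigr => i _.
  rewrite mulr_sumr; apply: eq_bigr => j _; rewrite /phihat e subr0; field; rewrite ?pnatr_eq0 //.
have [e2|ne2] := eqVneq gamma 2.
  rewrite e2.
  eapply deq.
    apply: dCM; apply: dCM; apply: dS => i; apply: dS => j.
    apply: dln; last exact: (dD (dC 1 s) (d_sqx _ _ s0)).
    by apply: (lt_le_trans ltr01); rewrite lerDl sqdist_ge0.
  transitivity (lx / 2 * (N%:R^-1 * (2 *
     \sum_i \sum_j phihat 2 x i j s * Dxv i j s))); last by field; rewrite ?N0 ?g0.
  congr (_ * (_ * _)); rewrite mulr_sumr; apply: eq_bigr => i _.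
  rewrite mulr_sumr; apply: eq_bigr => j _; rewrite /phihat divff // powR_inv1.
    by rewrite add0r; ring.
  by apply: (le_trans ler01); rewrite lerDl sqdist_ge0.
have g2' : 2 < gamma by rewrite lt_neqAle eq_sym ne2.
eapply deq.
  apply: dCM; apply: dCM; apply: dS => i; apply: dS => j.
  exact: (dB (dC _ _) (d_pow _ _ _ s0)).
have e : - ((gamma - 2) / 2) - 1 = - (gamma / 2) by lra.
have g0 : gamma - 2 != 0 by rewrite subr_eq0 gt_eqF.
transitivity (lx / (gamma - 2) * (N%:R^-1 * ((gamma - 2) *
   \sum_i \sum_j phihat gamma x i j s * Dxv i j s))); last by field; rewrite ?N0 ?g0.
congr (_ * (_ * _)); rewrite mulr_sumr; apply: eq_bigr => i _.
rewrite mulr_sumr; apply: eq_bigr => j _; rewrite /phihat e sub0r; field; rewrite ?pnatr_eq0 //.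
Qed.

Lemma d_Xx s : 0 < s -> is_derive s 1 (Xhat x) (\sum_i \sum_k 2 * (x i k s * v i k s)).
Proof. move=> s0; rewrite /Xhat; apply: dS => i; apply: dS => k; apply: dsq; exact: Hx. Qed.

Lemma d_Xv s : 0 < s -> is_derive s 1 (Xhat v) (\sum_i \sum_k 2 * (v i k s * Af i k s)).
Proof. move=> s0; rewrite /Xhat; apply: dS => i; apply: dS => k; apply: dsq; exact: Hv. Qed.

Definition E1 s := - (lv / N%:R) * \sum_i \sum_j phihat gamma x i j s * sqdist v i j s.

Lemma phiC i j s : phihat gamma x i j s = phihat gamma x j i s.
Proof. by rewrite /phihat sqdistC. Qed.

Lemma d_E2 s : 0 < s -> is_derive s 1 (E2 gamma lx lw x v) (E1 s).
Proof.
move=> s0; eapply deq.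
  exact: (dD (dD (dCM lw (d_Xx s0)) (d_Xv s0)) (d_S s0)).
have hA : \sum_i \sum_k 2 * (v i k s * Af i k s) =
   \sum_i \sum_k 2 * (v i k s * (lx / N%:R * \sum_j phihat gamma x i j s * (x j k s - x i k s)))
 + \sum_i \sum_k 2 * (v i k s * (lv / N%:R * \sum_j phihat gamma x i j s * (v j k s - v i k s)))
 - lw * \sum_i \sum_k 2 * (x i k s * v i k s).
  rewrite mulr_sumr -big_split -sumrB; apply: eq_bigr => i _.
  rewrite mulr_sumr -big_split -sumrB; apply: eq_bigr => k _ /=; rewrite /Af; ring.
rewrite hA !(@symsumc _ _ _ _ (fun i j => phihat gamma x i j s)); try by move=> *; exact: phiC.
rewrite /E1 /Dxv.
have -> : \sum_i \sum_j phihat gamma x i j s * \sum_k (v i k s - v j k s) * (v i k s - v j k s)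
   = \sum_i \sum_j phihat gamma x i j s * sqdist v i j s.
  apply: eq_bigr => i _; apply: eq_bigr => j _; congr (_ * _).
ring.
Qed.

Definition dphi i j s := - (gamma / 2) * powR (1 + sqdist x i j s) (- (gamma / 2) - 1) * (2 * Dxv i j s).

Definition E1d s := - (lv / N%:R) * \sum_i \sum_j
   (phihat gamma x i j s * (2 * Dvv i j s) + sqdist v i j s * dphi i j s).

Lemma d_E1 s : 0 < s -> is_derive s 1 E1 (E1d s).
Proof.
move=> s0; rewrite /E1; apply: dCM; apply: dS => i; apply: dS => j.
exact: (dM (d_phi i j s0) (d_sqv i j s0)).
Qed.

Lemma d_Dxv i j s : 0 < s -> derivable (Dxv i j) s 1.
Proof.
move=> s0; eapply exd; rewrite /Dxv; apply: dS => k.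
by apply: dM; apply: dB; (exact: Hx || exact: Hv).
Qed.

Lemma d_dphi i j s : 0 < s -> derivable (dphi i j) s 1.
Proof.
move=> s0; eapply exd; rewrite /dphi.
apply: dM; last by apply: dCM; apply: derivableP; exact: d_Dxv.
apply: dCM; exact: d_pow.
Qed.

Definition DDvv i j s := \sum_k ((v i k s - v j k s) * ('D_1 (Af i k) s - 'D_1 (Af j k) s)
   + (Af i k s - Af j k s) * (Af i k s - Af j k s)).

Lemma d_Dvv i j s : 0 < s -> is_derive s 1 (Dvv i j) (DDvv i j s).
Proof.
move=> s0; rewrite /Dvv; apply: dS => k.
apply: dM; apply: dB; try exact: Hv; apply: derivableP; exact: der_A.
Qed.

Lemma d_E1d t : 0 < t -> (forall i j k, v i k t = v j k t) ->
  is_derive t 1 E1d (- (lv / N%:R) * \sum_i \sum_j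
     (phihat gamma x i j t * (2 * \sum_k (Af i k t - Af j k t) ^+ 2))).
Proof.
move=> t0 veq; eapply deq.
  rewrite /E1d; apply: dCM; apply: dS => i; apply: dS => j.
  apply: dD; apply: dM; try exact: d_phi; try exact: d_sqv.
    apply: dCM; exact: d_Dvv.
  apply: derivableP; exact: d_dphi.
congr (_ * _); apply: eq_bigr => i _; apply: eq_bigr => j _.
have sq0 : sqdist v i j t = 0.
  by rewrite /sqdist big1 // => k _; rewrite (veq i j k) subrr expr0n.
have D0 : Dvv i j t = 0.
  by rewrite /Dvv big1 // => k _; rewrite (veq i j k) subrr mul0r.
have DD : DDvv i j t = \sum_k (Af i k t - Af j k t) ^+ 2.
  by rewrite /DDvv; apply: eq_bigr => k _; rewrite (veq i j k) subrr mul0r add0r expr2.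
rewrite sq0 D0 DD; ring.
Qed.

End Sys.

Lemma argmax_ex (R : realType) (N : nat) (a : 'I_N) (f : 'I_N -> R) :
  exists i, forall l, f l <= f i.
Proof.
case: (@arg_maxP _ R _ a predT f erefl) => i _ H; exists i => l; exact: H.
Qed.

Lemma term_le_sum (R : realType) (N : nat) (F : 'I_N -> R) i0 :
  (forall i, 0 <= F i) -> F i0 <= \sum_i F i.
Proof.
by move=> h; rewrite (bigD1 i0) //= lerDl sumr_ge0.
Qed.

Section Pos.
Variable R : realType.
Variables (M N : nat) (gamma lx lv lw : R) (x v : 'I_N -> 'I_M -> R -> R) (t : R).
Implicit Types (i j : 'I_N) (k : 'I_M).
Local Notation A := (Af gamma lx lv lw x v).
Hypothesis veq : forall i j k, v i k t = v j k t.
Hypothesis lx0 : 0 < lx.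
Hypothesis lw0 : 0 < lw.
Hypothesis HN : (0 < N)%N.

Lemma gform (e : 'I_M -> R) i :
  \sum_k A i k t * e k = lx / N%:R * \sum_l phihat gamma x i l t *
      (\sum_k x l k t * e k - \sum_k x i k t * e k) - lw * \sum_k x i k t * e k.
Proof.
have h : forall k, A i k t = lx / N%:R * \sum_l phihat gamma x i l t * (x l k t - x i k t)
     - lw * x i k t.
  move=> k; rewrite /Af.
  have -> : \sum_(l < N) phihat gamma x i l t * (v l k t - v i k t) = 0.
    by rewrite big1 // => l _; rewrite (veq l i k) subrr mulr0.
  ring.
under eq_bigr => k _ do rewrite h.
transitivity (\sum_k (lx / N%:R * \sum_l (phihat gamma x i l t * ((x l k t - x i k t) * e k))
    - lw * (x i k t * e k))).
  apply: eq_bigr => k _.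
  have -> : \sum_l phihat gamma x i l t * ((x l k t - x i k t) * e k) =
     (\sum_l phihat gamma x i l t * (x l k t - x i k t)) * e k.
    by rewrite mulr_suml; apply: eq_bigr => l _; ring.
  ring.
rewrite sumrB -!mulr_sumr exchange_big /=; congr (_ * _ - _).
apply: eq_bigr => l _; rewrite -sumrB mulr_sumr; apply: eq_bigr => k _; ring.
Qed.

Lemma Apos a b : 0 < sqdist x a b t -> exists i j, 0 < \sum_k (A i k t - A j k t) ^+ 2.
Proof.
move=> hab.
pose e k := x a k t - x b k t.
pose f l := \sum_k x l k t * e k.
have fab : f b < f a.
  have : f a - f b = sqdist x a b t.
    by rewrite /f -sumrB /sqdist; apply: eq_bigr => k _; rewrite /e; ring.
  by rewrite -subr_gt0 => ->.
have [i hi] := argmax_ex a f.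
have [j hj] := argmax_ex a (fun l => - f l).
exists i, j.
have phi0 : forall p q, 0 <= phihat gamma x p q t by move=> *; rewrite /phihat powR_ge0.
have c0 : 0 <= lx / N%:R by rewrite divr_ge0 // ltW.
have gi : \sum_k A i k t * e k <= - lw * f i.
  rewrite gform /f.
  have : lx / N%:R * \sum_l phihat gamma x i l t *
      (\sum_k x l k t * e k - \sum_k x i k t * e k) <= 0.
    apply: mulr_ge0_le0 => //; apply: sumr_le0 => l _.
    by apply: mulr_ge0_le0 => //; rewrite subr_le0; exact: hi.
  lra.
have gj : - lw * f j <= \sum_k A j k t * e k.
  rewrite gform /f.
  have : 0 <= lx / N%:R * \sum_l phihat gamma x j l t *
      (\sum_k x l k t * e k - \sum_k x j k t * e k).
    apply: mulr_ge0 => //; apply: sumr_ge0 => l _.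
    by apply: mulr_ge0 => //; rewrite subr_ge0 -lerN2; exact: hj.
  lra.
have fij : f j < f i.
  have h1 := hi a; have h2 : - f j >= - f b := hj b.
  lra.
have key : \sum_k (A i k t - A j k t) * e k < 0.
  under eq_bigr => k _ do rewrite mulrBl.
  rewrite sumrB.
  have : 0 < lw * (f i - f j) by apply: mulr_gt0 => //; rewrite subr_gt0.
  lra.
rewrite lt_neqAle sumr_ge0 ?andbT; last by move=> k _; exact: sqr_ge0.
apply/negP => /eqP /esym h0.
have h := psumr_eq0P (fun k _ => sqr_ge0 (A i k t - A j k t)) h0.
move: key; rewrite big1 ?ltxx // => k _.
by move: (h k isT) => /eqP; rewrite sqrf_eq0 => /eqP ->; rewrite mul0r.
Qed.
End Pos.

Unset Implicit Arguments.
Set Strict Implicit.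

Theorem lemma5p3 (R : realType) (M N : nat) (gamma lx lv lw : R)
  (x v : 'I_N -> 'I_M -> R -> R) (t : R) :
  (1 <= M)%N -> (1 <= N)%N ->
  0 < gamma -> 0 < lx -> 0 < lv -> 0 < lw ->
  (forall s : R, 0 < s -> forall (i : 'I_N) (k : 'I_M),
     is_derive s 1 (x i k) (v i k s)) ->
  (forall s : R, 0 < s -> forall (i : 'I_N) (k : 'I_M),
     is_derive s 1 (v i k)
       (lx / N%:R * \sum_(j < N) phihat gamma x i j s * (x j k s - x i k s)
        + lv / N%:R * \sum_(j < N) phihat gamma x i j s * (v j k s - v i k s)
        - lw * x i k s)) ->
  0 < t ->
  \sum_(i < N) \sum_(j < N) eucl_dist v i j t = 0 ->
  \sum_(i < N) \sum_(j < N) eucl_dist x i j t != 0 ->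
  derive1 (E2 gamma lx lw x v) t = 0 /\
  derive1 (derive1 (E2 gamma lx lw x v)) t = 0 /\
  derive1 (derive1 (derive1 (E2 gamma lx lw x v))) t < 0.
Proof.
move=> M1 HN g0 lx0 lv0 lw0 Hx Hv0 t0 hv hx.
have Hv : forall s : R, 0 < s -> forall (i : 'I_N) (k : 'I_M),
   is_derive s 1 (v i k) (Af gamma lx lv lw x v i k s) := Hv0.
have ed0 : forall (y : 'I_N -> 'I_M -> R -> R) i j, 0 <= eucl_dist y i j t.
  by move=> y i j; rewrite /eucl_dist sqrtr_ge0.
have sqv0 : forall i j, sqdist v i j t = 0.
  move=> i j.
  have h1 : \sum_j eucl_dist v i j t = 0.
    by apply: (psumr_eq0P _ hv) => // i' _; apply: sumr_ge0 => j' _; exact: ed0.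
  have h2 : eucl_dist v i j t = 0.
    by apply: (psumr_eq0P _ h1) => // j' _; exact: ed0.
  move: h2; rewrite /eucl_dist => /eqP; rewrite sqrtr_eq0 => h.
  by apply/eqP; rewrite eq_le h sqdist_ge0.
have veq : forall i j k, v i k t = v j k t.
  move=> i j k.
  have h : (v i k t - v j k t) ^+ 2 = 0.
    by apply: (psumr_eq0P _ (sqv0 i j)) => // k' _; exact: sqr_ge0.
  by move: h => /eqP; rewrite sqrf_eq0 subr_eq0 => /eqP.
have [a [b hab]] : exists a b, 0 < sqdist x a b t.
  apply: contra_notP (negP hx) => H; apply/eqP.
  apply: big1 => a _; apply: big1 => b _.
  have : sqdist x a b t <= 0.
    by rewrite leNgt; apply/negP => h; apply: H; exists a, b.
  by rewrite /eucl_dist -sqrtr_eq0 => /eqP.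
have D1 : forall s, 0 < s -> derive1 (E2 gamma lx lw x v) s = E1 gamma lv x v s.
  by move=> s s0; rewrite derive1E; have [_ ->] := d_E2 Hx Hv HN s0.
have D2 : forall s, 0 < s -> derive1 (derive1 (E2 gamma lx lw x v)) s
    = E1d gamma lx lv lw x v s.
  move=> s s0; rewrite derive1E.
  rewrite (@near_eq_derive _ _ _ _ (E1 gamma lv x v)).
    by have [_ ->] := d_E1 Hx Hv s0.
  by apply: filterS (lt_nbhsr s0) => u u0; exact: D1.
split.
  rewrite D1 // /E1 big1 ?mulr0 // => i _; rewrite big1 // => j _.
  by rewrite sqv0 mulr0.
split.
  rewrite D2 // /E1d big1 ?mulr0 // => i _; rewrite big1 // => j _.
  have -> : Dvv gamma lx lv lw x v i j t = 0.
    by rewrite /Dvv big1 // => k _; rewrite (veq i j k) subrr mul0r.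
  by rewrite sqv0 !(mulr0, mul0r, addr0).
rewrite derive1E (@near_eq_derive _ _ _ _ (E1d gamma lx lv lw x v)); last first.
  by apply: filterS (lt_nbhsr t0) => u u0; exact: D2.
have [_ ->] := d_E1d Hx Hv t0 veq.
have [i [j hij]] := Apos gamma lv veq lx0 lw0 hab.
rewrite mulNr oppr_lt0; apply: mulr_gt0; first by rewrite divr_gt0 // ltr0n.
have phi0 : forall p q, 0 < phihat gamma x p q t.
  move=> p q; rewrite /phihat powR_gt0 //.
  by apply: (lt_le_trans ltr01); rewrite lerDl sqdist_ge0.
have tge : forall p q, 0 <= phihat gamma x p q t *
    (2 * \sum_k (Af gamma lx lv lw x v p k t - Af gamma lx lv lw x v q k t) ^+ 2).
  move=> p q; apply: mulr_ge0; first exact: ltW.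
  by apply: mulr_ge0 => //; apply: sumr_ge0 => k _; exact: sqr_ge0.
rewrite (bigD1 i) //= (bigD1 j) //=.
apply: ltr_wpDr; first by apply: sumr_ge0 => p _; apply: sumr_ge0 => q _; exact: tge.
apply: ltr_wpDr; first by apply: sumr_ge0 => q _; exact: tge.
by apply: mulr_gt0 => //; apply: mulr_gt0.
Qed.
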